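(* For every pair of positive integers $(m,n)$ there exists a nonzero bounded big Hankel operator $\Gamma:H^2(\mathbb T^2)\to H^2(\mathbb T^2)^\perp$ of finite type $(m,n)$ such that $\sigma_{pq}(\Gamma)=0$ for all $p>m$ and $q>n$.
   Context: $H^2(\mathbb T^2)$ is the subspace of $L^2(\mathbb T^2)$ of functions with Fourier coefficients supported in $\{m,n\ge0\}$, and $P$ is its orthogonal projection. A big Hankel operator is an operator of the form $\Gamma_\phi f=(I-P)(\phi f)$ with $\phi\in L^2(\mathbb T^2)$. A closed subspace $\mathcal I\subset H^2(\mathbb T^2)$ has finite bi-codimension $(m,n)$ if $\mathcal I=V_1\otimes V_2$ (closed span of products $f(x)g(y)$) with $V_1,V_2\subset H^2(\mathbb T)$ closed of codimensions $m$ and $n$. A bounded Hankel operator is of finite type $(m,n)$ if its kernel has finite bi-codimension $(m,n)$. For a bounded Hankel operator $\Gamma$ and integers $p,q\ge0$, $$\sigma_{pq}(\Gamma)=\inf\{\|\Gamma|_{\mathcal I}\|\},$$ where the infimum runs over closed subspaces $\mathcal I\subset H^2(\mathbb T^2)$ invariant under multiplication by $e^{ix}$ and by $e^{iy}$ that have finite bi-codimension at most $(p,q)$. Equivalently, these are the subspaces $\mathcal I=b_1(x)b_2(y)H^2(\mathbb T^2)$ with $b_1$, $b_2$ finite Blaschke products having at most $p$ and $q$ factors, respectively. *)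

(* Defs.v *)
(* L^2(T^2) is modelled on the Fourier side as
   l^2(Z^2): a function f on T^2 is represented by its Fourier coefficients
   (int * int -> R[i]); L^2(T) likewise by int -> R[i]. *)
From HB Require Import structures.
From mathcomp Require Import all_boot all_order all_algebra.
From mathcomp Require Import complex.
From mathcomp Require Import all_classical all_reals all_analysis.
Set Implicit Arguments. Unset Strict Implicit. Unset Printing Implicit Defensive.
Import Order.TTheory GRing.Theory Num.Theory numFieldNormedType.Exports.
Local Open Scope ring_scope.
Local Open Scope ring_scope.
Local Open Scope classical_set_scope.

Section Hankel.
Variable R : realType.
Local Notation C := (R[i]).

Definition sqmod (z : C) : R := complex.Re z ^+ 2 + complex.Im z ^+ 2.

(* ||a||_2^2 in L^2(T^2) = l^2(Z^2) (Parseval), and in L^2(T) = l^2(Z) *)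
Definition l2norm2 (a : int * int -> C) : \bar R :=
  (\esum_(k in [set: int * int]) (sqmod (a k))%:E)%E.
Definition l2norm1 (a : int -> C) : \bar R :=
  (\esum_(k in [set: int]) (sqmod (a k))%:E)%E.

Definition H2_2 (f : int * int -> C) : Prop :=
  (l2norm2 f < +oo)%E /\ (forall k, (k.1 < 0) || (k.2 < 0) -> f k = 0).
Definition H2_1 (f : int -> C) : Prop :=
  (l2norm1 f < +oo)%E /\ (forall k, k < 0 -> f k = 0).

Definition box (N : nat) : seq (int * int) :=
  [seq ((x%:Z - N%:Z)%R, (y%:Z - N%:Z)%R) | x <- iota 0 N.*2.+1, y <- iota 0 N.*2.+1].

Definition csum2 (a : int * int -> C) : C :=
  Complex (limn ((fun N => complex.Re (\sum_(k <- box N) a k)) : R^nat))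
          (limn ((fun N => complex.Im (\sum_(k <- box N) a k)) : R^nat)).

(* Fourier coefficients of the product phi * f (a convolution, absolutely
   convergent for phi, f in L^2). *)
Definition mulF (phi f : int * int -> C) (k : int * int) : C :=
  csum2 (fun j => phi (k.1 - j.1, k.2 - j.2) * f j).

(* big Hankel operator Gamma_phi f = (I - P)(phi f) *)
Definition hankel (phi f : int * int -> C) : int * int -> C :=
  fun k => if (k.1 < 0) || (k.2 < 0) then mulF phi f k else 0.

Definition bounded_hankel (phi : int * int -> C) : Prop :=
  (l2norm2 phi < +oo)%E /\
  exists M : R, forall f, H2_2 f ->
    (l2norm2 (hankel phi f) <= (M ^+ 2)%:E * l2norm2 f)%E.

Definition closed_subspace1 (V : set (int -> C)) : Prop :=
  [/\ V `<=` H2_1, V (fun _ => 0),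
      (forall u v, V u -> V v -> V (fun k => u k + v k)),
      (forall (c : C) v, V v -> V (fun k => c * v k)) &
      (forall f, H2_1 f ->
         (forall e : R, 0 < e -> exists v, V v /\ (l2norm1 (fun k => (f k - v k)%R) < e%:E)%E) ->
         V f)].

Definition codim1 (V : set (int -> C)) (m : nat) : Prop :=
  exists e : 'I_m -> int -> C,
    (forall i, H2_1 (e i)) /\
    (forall f, H2_1 f -> exists (c : 'I_m -> C) (v : int -> C),
        V v /\ f = (fun k => v k + \sum_(i < m) c i * e i k)) /\
    (forall c : 'I_m -> C, V (fun k => \sum_(i < m) c i * e i k) -> forall i, c i = 0).

Definition tensor (g h : int -> C) : int * int -> C := fun k => g k.1 * h k.2.

Definition bitensor (V1 V2 : set (int -> C)) : set (int * int -> C) :=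
  [set F | forall e : R, 0 < e ->
     exists s : seq ((int -> C) * (int -> C)),
       (forall gh, gh \in s -> V1 gh.1 /\ V2 gh.2) /\
       (l2norm2 (fun k => (F k - \sum_(gh <- s) tensor gh.1 gh.2 k)%R) < e%:E)%E].

Definition bicodim (I : set (int * int -> C)) (m n : nat) : Prop :=
  exists V1 V2, [/\ closed_subspace1 V1, closed_subspace1 V2,
                    codim1 V1 m, codim1 V2 n & I = bitensor V1 V2].

Definition hankel_kernel (phi : int * int -> C) : set (int * int -> C) :=
  [set f | H2_2 f /\ hankel phi f = (fun _ => 0)].

Definition finite_type (phi : int * int -> C) (m n : nat) : Prop :=
  bicodim (hankel_kernel phi) m n.

(* multiplication by e^{ix} and e^{iy} on Fourier coefficients *)
Definition shiftx (f : int * int -> C) : int * int -> C := fun k => f (k.1 - 1, k.2).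
Definition shifty (f : int * int -> C) : int * int -> C := fun k => f (k.1, k.2 - 1).

(* sigma_pq(Gamma_phi) = 0, i.e. the infimum of ||Gamma|_I|| over closed
   subspaces I invariant under e^{ix}, e^{iy} of finite bi-codimension at
   most (p,q) is 0 *)
Definition sigma_zero (phi : int * int -> C) (p q : nat) : Prop :=
  forall eps : R, 0 < eps ->
    exists I : set (int * int -> C),
      [/\ (forall f, I f -> I (shiftx f)), (forall f, I f -> I (shifty f)),
          (exists p' q', [/\ (p' <= p)%N, (q' <= q)%N & bicodim I p' q']) &
          (forall f, I f -> (l2norm2 (hankel phi f) <= (eps ^+ 2)%:E * l2norm2 f)%E)].

End Hankel.

(* Main.v *)
Require Import Defs.
From HB Require Import structures.
From mathcomp Require Import all_boot all_order all_algebra.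
From mathcomp Require Import complex.
From mathcomp Require Import all_classical all_reals all_analysis.
From mathcomp Require Import ring lra finmap zify.
Set Implicit Arguments. Unset Strict Implicit. Unset Printing Implicit Defensive.
Import Order.TTheory GRing.Theory Num.Theory numFieldNormedType.Exports.
Local Open Scope ring_scope.
Local Open Scope classical_set_scope.

Section S.
Variable R : realType.
Local Notation C := (R[i]).

Lemma sqmod_ge0 (z : C) : 0 <= sqmod z.
Proof. by rewrite /sqmod addr_ge0 // sqr_ge0. Qed.

Lemma sqmodM (x y : C) : sqmod (x * y) = sqmod x * sqmod y.
Proof. case: x => a b; case: y => c d; rewrite /sqmod /=. ring. Qed.

Lemma sqmodD (x y : C) : sqmod (x + y) <= 2 * sqmod x + 2 * sqmod y.
Proof. case: x => a b; case: y => c d; rewrite /sqmod /=.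
have h1 := sqr_ge0 (a - c); have h2 := sqr_ge0 (b - d). nra. Qed.

Lemma sqmodN (x : C) : sqmod (- x) = sqmod x.
Proof. case: x => a b; rewrite /sqmod /= !sqrrN //. Qed.

Lemma sqmodB (x y : C) : sqmod (x - y) <= 2 * sqmod x + 2 * sqmod y.
Proof. by rewrite -(sqmodN y) sqmodD. Qed.

Lemma sqmod_eq0 (x : C) : sqmod x = 0 -> x = 0.
Proof. case: x => a b; rewrite /sqmod /= => h.
have ha : a = 0 by apply/eqP; rewrite -sqrf_eq0; apply/eqP; nra.
have hb : b = 0 by apply/eqP; rewrite -sqrf_eq0; apply/eqP; nra.
by rewrite ha hb. Qed.

Lemma sqmod0 : sqmod (0 : C) = 0.
Proof. by rewrite /sqmod /= expr0n /= addr0. Qed.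
Lemma sqmod1 : sqmod (1 : C) = 1.
Proof. by rewrite /sqmod /= expr0n /= addr0 expr1n. Qed.

Section Gen.
Variable T : choiceType.
Implicit Types (a b : T -> C).

Definition nrm a : \bar R := (\esum_(k in [set: T]) (sqmod (a k))%:E)%E.

Lemma nrm_ge0 a : (0 <= nrm a)%E.
Proof. by apply: esum_ge0 => k _; rewrite lee_fin sqmod_ge0. Qed.

Lemma nrm_le a b : (forall k, sqmod (a k) <= sqmod (b k)) -> (nrm a <= nrm b)%E.
Proof. by move=> h; apply: le_esum => k _; rewrite lee_fin. Qed.

Lemma esumZ (c : R) (f : T -> \bar R) : 0 <= c -> (forall k, 0 <= f k)%E ->
  (\esum_(k in [set: T]) (c%:E * f k) = c%:E * \esum_(k in [set: T]) f k)%E.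
Proof.
move=> c0 f0; rewrite /esum -ereal_supZl //; last first.
  by apply/set0P; exists 0%E; exists set0; [exact: fsets_set0|rewrite fsbig_set0].
congr ereal_sup; apply/seteqP; split => x /=.
  move=> [A hA <-]; exists (\sum_(i \in A) f i)%E; first by exists A.
  by rewrite ge0_mule_fsumr.
move=> [y [A hA <-] <-]; exists A => //; by rewrite ge0_mule_fsumr.
Qed.

Lemma nrm_pt a k : ((sqmod (a k))%:E <= nrm a)%E.
Proof.
apply: esum_ge; exists [set k]; first by split => //; exact: finite_set1.
by rewrite fsbig_set1.
Qed.

Lemma nrmZ (c : C) a : nrm (fun k => c * a k) = ((sqmod c)%:E * nrm a)%E.
Proof.
rewrite -esumZ ?sqmod_ge0 //; last by move=> k; rewrite lee_fin sqmod_ge0.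
by apply: eq_esum => k _; rewrite sqmodM.
Qed.

Lemma nrmD_le a b : (nrm (fun k => (a k + b k)%R) <= 2%:E * nrm a + 2%:E * nrm b)%E.
Proof.
rewrite -!esumZ // -?esumD; last 4 first.
- by move=> k _; rewrite -EFinM lee_fin mulr_ge0 // sqmod_ge0.
- by move=> k _; rewrite -EFinM lee_fin mulr_ge0 // sqmod_ge0.
- by move=> k; rewrite lee_fin sqmod_ge0.
- by move=> k; rewrite lee_fin sqmod_ge0.
by apply: le_esum => k _; rewrite -!EFinM -EFinD lee_fin sqmodD.
Qed.

Definition fin a := (nrm a < +oo)%E.

Lemma fin_le a b : (forall k, sqmod (a k) <= sqmod (b k)) -> fin b -> fin a.
Proof. by move=> h; apply: le_lt_trans; apply: nrm_le. Qed.

Lemma finD a b : fin a -> fin b -> fin (fun k => a k + b k).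
Proof.
move=> ha hb; rewrite /fin (le_lt_trans (nrmD_le a b)) //.
by apply: lte_add_pinfty; rewrite -?EFinM lte_mul_pinfty.
Qed.

Lemma finZ (c : C) a : fin a -> fin (fun k => c * a k).
Proof. by move=> ha; rewrite /fin nrmZ lte_mul_pinfty // lee_fin sqmod_ge0. Qed.

Lemma fin0 : fin (fun _ => 0).
Proof.
rewrite /fin /nrm esum1 // => k _; by rewrite sqmod0.
Qed.

Lemma finN a : fin a -> fin (fun k => - a k).
Proof. by apply: fin_le => k; rewrite sqmodN. Qed.

Lemma finB a b : fin a -> fin b -> fin (fun k => a k - b k).
Proof. by move=> ha hb; apply: finD => //; apply: finN. Qed.

Lemma fin_sum (I : eqType) (s : seq I) (F : I -> T -> C) :
  (forall i, i \in s -> fin (F i)) -> fin (fun k => \sum_(i <- s) F i k).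
Proof.
elim: s => [|i s IH] h.
  by apply: (fin_le _ fin0) => k; rewrite big_nil.
have -> : (fun k => \sum_(j <- i :: s) F j k) = (fun k => F i k + \sum_(j <- s) F j k).
  by apply: funext => k; rewrite big_cons.
apply: finD; first by apply: h; rewrite mem_head.
by apply: IH => j js; apply: h; rewrite in_cons js orbT.
Qed.

Lemma fin_supp (s : seq T) a : (forall k, k \notin s -> a k = 0) -> fin a.
Proof.
move=> h; rewrite /fin /nrm.
have -> : (\esum_(k in [set: T]) (sqmod (a k))%:E = \esum_(k in [set` s]) (sqmod (a k))%:E)%E.
  rewrite [RHS]esum_mkcond; apply: eq_esum => k _.
  case: ifPn => // ks; rewrite h ?sqmod0 //.
  by apply: contraNN ks => ks; rewrite in_setE.
rewrite esum_fset ?finite_seq //; last by move=> i _; rewrite lee_fin sqmod_ge0.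
by rewrite fsumEFin ?finite_seq // ltry.
Qed.

Lemma nrm_reindex (e : T -> T) a : bijective e -> nrm (fun k => a (e k)) = nrm a.
Proof.
move=> be; rewrite /nrm [RHS](reindex_esum [set: T] [set: T] e) //.
by rewrite (setTT_bijective e).
Qed.

Lemma sqmod_ge0' (z : C) : (0 <= (sqmod z)%:E)%E.
Proof. by rewrite lee_fin sqmod_ge0. Qed.

Lemma fin_tail a (eps : R) : fin a -> 0 < eps -> exists s : seq T,
  (nrm (fun k => if k \in s then 0%R else a k) < eps%:E)%E.
Proof.
move=> fa e0.
have nfin : nrm a \is a fin_num by rewrite ge0_fin_numE ?nrm_ge0.
have : (nrm a - eps%:E < nrm a)%E by rewrite lteBlDr // lteDl // lte_fin.
move=> /ereal_sup_gt [y [X [finX _] <-]] hlt.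
exists (finmap.enum_fset (fset_set X)).
have hID := esumID X [set: T] (fun k => (sqmod (a k))%:E)
   (fun k _ => sqmod_ge0' (a k)).
have hX : (\esum_(i in [set: T] `&` X) (sqmod (a i))%:E = \sum_(i \in X) (sqmod (a i))%:E)%E.
  by rewrite setTI esum_fset // => k _; rewrite lee_fin sqmod_ge0.
rewrite /nrm hID hX in hlt nfin.
have eqt : nrm (fun k => if k \in fset_set X then 0 else a k) =
    (\esum_(i in [set: T] `&` ~` X) (sqmod (a i))%:E)%E.
  rewrite esum_mkcondr; apply: eq_esum => k _.
  rewrite -[_ \in finmap.enum_fset _]/(k \in fset_set X) in_fset_set // in_setC; case: ifPn => _; by rewrite ?sqmod0.
rewrite eqt; move: hlt nfin.
set u := (\sum_(i \in X) _)%E; set v := (\esum_(i in _) _)%E.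
move=> hlt nfin.
have u0 : (0 <= u)%E by apply: fsume_ge0 => k _; rewrite lee_fin sqmod_ge0.
have v0 : (0 <= v)%E by apply: esum_ge0 => k _; rewrite lee_fin sqmod_ge0.
have [uf vf] : u \is a fin_num /\ v \is a fin_num.
  by move: nfin; rewrite fin_numD => /andP.
rewrite -(fineK uf) -(fineK vf) in hlt.
rewrite -EFinD lte_fin in hlt.
rewrite -(fineK vf) lte_fin; lra.
Qed.

End Gen.

Lemma tensor_fin (g h : int -> C) : fin g -> fin h -> fin (tensor g h).
Proof.
move=> fg fh.
have hf : nrm h \is a fin_num by rewrite ge0_fin_numE ?nrm_ge0.
rewrite /fin /nrm.
have -> : [set: int * int] = [set: int] `*`` (fun _ => [set: int]).
  by apply/seteqP; split => -[x y].
rewrite -(esum_esum (a := fun (i j : int) => (sqmod (tensor g h (i, j)))%:E)); last first.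
  by move=> i j _ _; exact: sqmod_ge0'.
under eq_esum => i _.
  under eq_esum => j _ do rewrite /tensor /= sqmodM EFinM.
  rewrite esumZ ?sqmod_ge0 //; last by move=> j; exact: sqmod_ge0'.
  rewrite -[X in (_ * X)%E](fineK hf) muleC.
  over.
rewrite esumZ //; last by move=> j; exact: sqmod_ge0'.
  by rewrite lte_mul_pinfty // lee_fin fine_ge0 // nrm_ge0.
by rewrite fine_ge0 // nrm_ge0.
Qed.

Lemma small0 (z : C) : (forall e : R, 0 < e -> sqmod z < e) -> z = 0.
Proof.
move=> h; apply: sqmod_eq0.
have [//|hz] := eqVneq (sqmod z) 0.
have hp : 0 < sqmod z by rewrite lt0r hz sqmod_ge0.
by have := h _ hp; rewrite ltxx.
Qed.

Lemma l2E2 (a : int * int -> C) : l2norm2 a = nrm a. Proof. by []. Qed.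
Lemma l2E1 (a : int -> C) : l2norm1 a = nrm a. Proof. by []. Qed.

Variables (m n : nat).

Definition phi : int * int -> C :=
  fun k => if (k.1 == - m%:Z) && (k.2 == - n%:Z) then 1 else 0.

Lemma box_uniq N : uniq (box N).
Proof.
apply: allpairs_uniq; try exact: iota_uniq.
move=> [x y] [x' y'] _ _ /= [] h1 h2.
by congr pair; apply/eqP; move/eqP: h1; move/eqP: h2; lia.
Qed.

Lemma mem_box (a : int * int) N : (absz a.1 <= N)%N -> (absz a.2 <= N)%N -> a \in box N.
Proof.
case: a => a b /= ha hb.
have -> : (a, b) = ((absz (a + N%:Z))%:Z - N%:Z, (absz (b + N%:Z))%:Z - N%:Z).
  by congr pair; apply/eqP; lia.
by apply: (allpairs_f (fun x y : nat => (x%:Z - N%:Z, y%:Z - N%:Z)));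
  rewrite mem_iota; lia.
Qed.

Lemma mulF_phi f k : mulF phi f k = f (k.1 + m%:Z, k.2 + n%:Z).
Proof.
set j0 := (k.1 + m%:Z, k.2 + n%:Z).
have hs : forall N, (absz j0.1 <= N)%N -> (absz j0.2 <= N)%N ->
    \sum_(j <- box N) phi (k.1 - j.1, k.2 - j.2) * f j = f j0.
  move=> N h1 h2; rewrite (bigD1_seq j0) ?box_uniq ?mem_box //= big1_seq.
    rewrite /phi /= !ifT ?mul1r ?addr0 //; apply/andP; split; apply/eqP; rewrite /j0 /=; lia.
  move=> [a b] /andP [hne _]; rewrite /phi /=.
  case: ifPn => [/andP [/eqP h1' /eqP h2']|]; last by rewrite mul0r.
  exfalso; move: hne; rewrite /j0 xpair_eqE negb_and => /orP [] /eqP []; lia.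
rewrite /mulF /csum2.
have Hl : forall (u : R^nat) (c : R), (\forall N \near \oo, u N = c) -> limn u = c.
  by move=> u c hu; apply: lim_near_cst.
rewrite (Hl _ (complex.Re (f j0))); last first.
  exists (absz j0.1 + absz j0.2)%N => // N /= hN.
  by rewrite hs //; rewrite /j0 /=; lia.
rewrite (Hl _ (complex.Im (f j0))); last first.
  exists (absz j0.1 + absz j0.2)%N => // N /= hN.
  by rewrite hs //; rewrite /j0 /=; lia.
by case: (f j0).
Qed.


Definition negq (k : int * int) := (k.1 < 0) || (k.2 < 0).

Lemma hankel_phi f k : hankel phi f k = if negq k then f (k.1 + m%:Z, k.2 + n%:Z) else 0.
Proof. by rewrite /hankel mulF_phi. Qed.

Definition Kset : set (int * int -> C) :=
  [set F | fin F /\ forall k, (k.1 < m%:Z) || (k.2 < n%:Z) -> F k = 0].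

Lemma shift_bij (a b : int) : bijective (fun k : int * int => (k.1 + a, k.2 + b)).
Proof.
exists (fun k : int * int => (k.1 - a, k.2 - b)) => -[x y] /=; congr pair; ring.
Qed.

Lemma phi_bounded : bounded_hankel phi.
Proof.
split.
  rewrite l2E2; apply: (fin_supp (s := [:: (- m%:Z, - n%:Z)])) => -[a b].
  rewrite inE /phi /= xpair_eqE; by case: ifP.
exists 1 => f _; rewrite expr1n mul1e !l2E2.
rewrite -(nrm_reindex f (shift_bij m%:Z n%:Z)).
apply: nrm_le => k; rewrite hankel_phi; case: ifP => _ //.
by rewrite sqmod0 sqmod_ge0.
Qed.

Definition delta2 (j : int * int) : int * int -> C := fun k => if k == j then 1 else 0.

Lemma fin_delta2 j : fin (delta2 j).
Proof. apply: (fin_supp (s := [:: j])) => k; rewrite inE /delta2; by case: ifP. Qed.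

Lemma phi_nontriv : (0 < m)%N -> (0 < n)%N ->
  exists f, H2_2 f /\ hankel phi f <> (fun _ => 0).
Proof.
move=> hm hn; exists (delta2 (0, 0)); split.
  split; first exact: fin_delta2.
  move=> [a b] /= h; rewrite /delta2 xpair_eqE; case: ifP => // /andP [/eqP ha /eqP hb].
  by move: h; rewrite ha hb.
move=> /(congr1 (fun g => g (- m%:Z, - n%:Z))); rewrite hankel_phi /negq /=.
rewrite ifT; last lia.
rewrite /delta2 ifT; last by rewrite xpair_eqE; apply/andP; split; apply/eqP; ring.
by move/eqP; rewrite oner_eq0.
Qed.

Lemma kernelE : hankel_kernel phi = Kset.
Proof.
apply/seteqP; split => F /=.
  move=> [[fF supp] hk]; split => // -[a b] /= hab.
  have [hn'|hn'] := boolP ((a < 0) || (b < 0)); first by apply: supp.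
  have := congr1 (fun g => g (a - m%:Z, b - n%:Z)) hk; rewrite hankel_phi /negq /=.
  rewrite ifT; last first.
    by move: hab hn'; lia.
  by rewrite !subrK.
move=> [fF supp]; split.
  split => // -[a b] hk; apply: supp; move: hk => /=; lia.
apply: funext => -[a b]; rewrite hankel_phi; case: ifP => // hk.
by apply: supp => /=; move: hk; rewrite /negq /=; lia.
Qed.

Definition Vd (d : nat) : set (int -> C) := [set g | H2_1 g /\ forall k, k < d%:Z -> g k = 0].

Lemma Vd_closed d : closed_subspace1 (Vd d).
Proof.
split.
- by move=> g [].
- by split; [split; [rewrite l2E1; apply: fin0|]|].
- move=> u v [[fu su] zu] [[fv sv] zv]; split; first split.
  + by rewrite l2E1; apply: finD.
  + by move=> k hk; rewrite su ?sv ?addr0.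
  + by move=> k hk; rewrite zu ?zv ?addr0.
- move=> c v [[fv sv] zv]; split; first split.
  + by rewrite l2E1; apply: finZ.
  + by move=> k hk; rewrite sv ?mulr0.
  + by move=> k hk; rewrite zv ?mulr0.
- move=> f hf happ; split => // k hk; apply: small0 => e he.
  have [v [[_ zv] hv]] := happ e he.
  rewrite l2E1 in hv.
  move: (le_lt_trans (nrm_pt (fun k => f k - v k) k) hv).
  by rewrite zv // subr0 lte_fin.
Qed.

Definition edelta (d : nat) (i : 'I_d) : int -> C := fun k => if k == i%:Z then 1 else 0.

Lemma sum_edelta d (c : 'I_d -> C) (i : 'I_d) : \sum_(j < d) c j * edelta j i%:Z = c i.
Proof.
rewrite (bigD1 i) //= big1 ?addr0; first by rewrite /edelta eqxx mulr1.
move=> j hj; rewrite /edelta; case: ifP; last by rewrite mulr0.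
by move/eqP => h; move: hj; rewrite (_ : i = j) ?eqxx //; apply: val_inj; case: h.
Qed.

Lemma sum_edelta_neg d (c : 'I_d -> C) (k : int) : k < 0 -> \sum_(j < d) c j * edelta j k = 0.
Proof.
move=> hk; rewrite big1 // => j _; rewrite /edelta; case: ifP; last by rewrite mulr0.
by move/eqP => h; move: hk; rewrite h.
Qed.

Lemma Vd_codim d : codim1 (Vd d) d.
Proof.
exists (@edelta d); split; [|split].
- move=> i; split.
  + by rewrite l2E1; apply: (fin_supp (s := [:: i%:Z])) => k; rewrite inE /edelta; case: ifP.
  + by move=> k hk; rewrite /edelta; case: ifP => // /eqP h; move: hk; rewrite h.
- move=> f [ff sf]; exists (fun i => f i%:Z).
  exists (fun k => f k - \sum_(i < d) f i%:Z * edelta i k); split; last first.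
    by apply: funext => k; rewrite subrK.
  split; first split.
  + rewrite l2E1; apply: finB => //; apply: fin_sum => i _; apply: finZ.
    by apply: (fin_supp (s := [:: i%:Z])) => k; rewrite inE /edelta; case: ifP.
  + by move=> k hk; rewrite sf // sum_edelta_neg // subrr.
  + move=> k hk; have [hk0|hk0] := ltP k 0; first by rewrite sf // sum_edelta_neg // subrr.
    have hkd : (absz k < d)%N by lia.
    have -> : k = (Ordinal hkd)%:Z by rewrite /=; lia.
    by rewrite (sum_edelta (fun i : 'I_d => f i%:Z)) subrr.
- move=> c [_ hz] i; have := hz i%:Z; rewrite sum_edelta; apply.
  by rewrite ltz_nat ltn_ord.
Qed.

Lemma sum_pick (s : seq (int * int)) (F : int * int -> C) k : uniq s ->
  \sum_(j <- s) (if k.1 == j.1 then F j else 0) * (if k.2 == j.2 then 1 else 0)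
  = if k \in s then F k else 0.
Proof.
elim: s => [|j s IH] /=; first by rewrite big_nil.
move=> /andP [hj us]; rewrite big_cons IH // in_cons.
clear IH; case: k => a b; case: j hj => c d hj /=.
have [ec|nc] := eqVneq a c; have [ed|nd] := eqVneq b d;
  rewrite xpair_eqE ?ec ?ed ?eqxx ?(negPf nc) ?(negPf nd) /=;
  rewrite ?mulr1 ?mulr0 ?mul0r ?add0r //.
by rewrite ifN ?addr0.

Qed.

Lemma bitensorE : bitensor (Vd m) (Vd n) = Kset.
Proof.
apply/seteqP; split => F /=.
  move=> hF; split.
    have [s [hs hl]] := hF 1 ltr01.
    set S := fun k => \sum_(gh <- s) tensor gh.1 gh.2 k.
    have fS : fin S.
      apply: fin_sum => gh hin; have [[[g1 _] _] [[g2 _] _]] := hs gh hin.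
      exact: tensor_fin.
    apply: (fin_le (b := fun k => (F k - S k) + S k)) => [k|]; first by rewrite subrK.
    apply: finD => //; rewrite /fin; apply: lt_trans hl _; exact: ltry.
  move=> k hk; apply: small0 => e he.
  have [s [hs hl]] := hF e he.
  have hS : \sum_(gh <- s) tensor gh.1 gh.2 k = 0.
    rewrite big1_seq // => gh /andP [_ hin]; have [[_ z1] [_ z2]] := hs gh hin.
    by rewrite /tensor; case/orP: hk => h; [rewrite z1 // mul0r|rewrite z2 // mulr0].
  move: (le_lt_trans (nrm_pt _ k) hl).
  by rewrite hS subr0 lte_fin.
move=> [fF supp] e he.
have [s0 hs0] := fin_tail fF he.
set s := [seq j <- undup s0 | F j != 0].
have us : uniq s by rewrite filter_uniq // undup_uniq.
have hjs : forall j, j \in s -> (m%:Z <= j.1) /\ (n%:Z <= j.2).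
  move=> [a b]; rewrite mem_filter => /andP [hF _].
  have [h|h] := boolP ((a < m%:Z) || (b < n%:Z)); first by move: hF; rewrite supp ?eqxx.
  by move: h => /= /norP [h1 h2]; rewrite !leNgt.
exists [seq ((fun x => if x == j.1 then F j else 0), (fun y => if y == j.2 then 1 else 0)) | j <- s].
split.
  move=> gh /mapP [j hj ->] /=; have [h1 h2] := hjs j hj.
  split; split; first split.
  - by apply: (fin_supp (s := [:: j.1])) => x; rewrite inE; case: ifP.
  - by move=> x hx; rewrite ifN //; apply/eqP => hx'; move: hx; rewrite hx' ltNge (le_trans _ h1).
  - by move=> x hx; rewrite ifN //; apply/eqP => hx'; move: hx; rewrite hx' ltNge h1.
  - split.
    + by apply: (fin_supp (s := [:: j.2])) => x; rewrite inE; case: ifP.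
    + by move=> x hx; rewrite ifN //; apply/eqP => hx'; move: hx; rewrite hx' ltNge (le_trans _ h2).
  - by move=> x hx; rewrite ifN //; apply/eqP => hx'; move: hx; rewrite hx' ltNge h2.
apply: le_lt_trans hs0; rewrite l2E2; apply: nrm_le => k.
rewrite big_map /tensor /= sum_pick //.
case: ifPn => hks; first by rewrite subrr sqmod0 sqmod_ge0.
rewrite subr0; case: ifPn => // hk0.
suff -> : F k = 0 by rewrite sqmod0.
by apply/eqP; move: hks; rewrite mem_filter mem_undup hk0 andbT negbK.
Qed.

Lemma Kset_shiftx F : Kset F -> Kset (shiftx F).
Proof.
move=> [fF supp]; split.
  have -> : shiftx F = (fun k => F ((fun k : int * int => (k.1 + -1, k.2 + 0)) k)).
    by apply: funext => k; rewrite /shiftx addr0.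
  by rewrite /fin (nrm_reindex F (shift_bij (-1) 0)).
move=> [a b] /= h; rewrite /shiftx /=; apply: supp => /=; move: h; lia.
Qed.

Lemma Kset_shifty F : Kset F -> Kset (shifty F).
Proof.
move=> [fF supp]; split.
  have -> : shifty F = (fun k => F ((fun k : int * int => (k.1 + 0, k.2 + -1)) k)).
    by apply: funext => k; rewrite /shifty addr0.
  by rewrite /fin (nrm_reindex F (shift_bij 0 (-1))).
move=> [a b] /= h; rewrite /shifty /=; apply: supp => /=; move: h; lia.
Qed.

Lemma bicodimK : bicodim Kset m n.
Proof.
exists (Vd m), (Vd n); split; try exact: Vd_closed; try exact: Vd_codim.
by rewrite bitensorE.
Qed.

End S.

Local Close Scope classical_set_scope.

Theorem mainTheorem9 (R : realType) (m n : nat) (hm : (0 < m)%N) (hn : (0 < n)%N) :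
  exists phi : int * int -> R[i],
    [/\ bounded_hankel phi,
        (exists f, H2_2 f /\ hankel phi f <> (fun _ => 0)),
        finite_type phi m n &
        forall p q : nat, (m < p)%N -> (n < q)%N -> sigma_zero phi p q].
Proof.
exists (@phi R m n); split.
- exact: phi_bounded.
- exact: phi_nontriv.
- by rewrite /finite_type kernelE; exact: bicodimK.
- move=> p q hp hq eps he; exists (@Kset R m n); split.
  + exact: Kset_shiftx.
  + exact: Kset_shifty.
  + by exists m, n; split; [exact: ltnW|exact: ltnW|exact: bicodimK].
  + move=> f hf; have : hankel_kernel (@phi R m n) f by rewrite kernelE.
    move=> [_ ->].
    have -> : l2norm2 (fun _ : int * int => 0 : R[i]) = 0%E.
      by rewrite /l2norm2 esum1 // => k _; rewrite sqmod0.
    rewrite mule_ge0 // ?lee_fin ?sqr_ge0 //.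
    by apply: esum_ge0 => k _; exact: sqmod_ge0'.
Qed.
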